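(* Let $n \ge 2$ be an integer and let $\mathcal{C}(I,n)$ denote the class of all vectors $\mathbf{X}=(X_1,\ldots,X_n)$ of independent random variables, each taking values in $[0,1]$. For $\mathbf{X}\in\mathcal{C}(I,n)$ put $U(\mathbf{X})=\max_{1\le i\le n} E X_i$ and $M(\mathbf{X})=E(\max_{1\le i\le n} X_i)$. Then $$\{(x,y)\mid x=U(\mathbf{X}),\ y=M(\mathbf{X}),\ \mathbf{X}\in\mathcal{C}(I,n)\} = \{(x,y)\mid 0\le x\le 1,\ x\le y\le 1-(1-x)^n\}.$$
   Context: $U(\mathbf{X})$ is the expected return of an observer who only knows the expectations of the $X_i$; $M(\mathbf{X})$ is the expected return of an observer (the ''prophet'') who sees all realizations and picks the largest. The set on the left is called the prophet region of $\mathcal{C}(I,n)$ for this pair of information levels. *)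

(* Defs.v *)
From HB Require Import structures.
From mathcomp Require Import all_boot all_order all_algebra.
From mathcomp Require Import all_classical all_reals all_analysis.
Set Implicit Arguments. Unset Strict Implicit. Unset Printing Implicit Defensive.
Import Order.TTheory GRing.Theory Num.Theory.
Local Open Scope classical_set_scope.
Local Open Scope ring_scope.

Definition mutually_independent {d} {T : measurableType d} {R : realType}
  (P : probability T R) (n : nat) (X : 'I_n -> {RV P >-> R}) : Prop :=
  forall B : 'I_n -> set R, (forall i, measurable (B i)) ->
    P (\bigcap_(i in [set: 'I_n]) (X i @^-1` B i)) =
    (\prod_(i < n) P (X i @^-1` B i))%E.

Definition U_val {d} {T : measurableType d} {R : realType}
  (P : probability T R) (n : nat) (X : 'I_n -> {RV P >-> R}) : \bar R :=
  \big[maxe/-oo%E]_(i < n) ('E_P[X i])%E.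

(* M(X) = E (max_i X_i); the pointwise maximum is taken with base value 0,
   which is harmless since all X_i are [0,1]-valued in the class C(I,n). *)
Definition M_val {d} {T : measurableType d} {R : realType}
  (P : probability T R) (n : nat) (X : 'I_n -> {RV P >-> R}) : \bar R :=
  ('E_P[fun w => (\big[Num.max/0%R]_(i < n) X i w)%R])%E.

Arguments mutually_independent {d T R} P {n} X.
Arguments U_val {d T R} P {n} X.
Arguments M_val {d T R} P {n} X.

(* Main.v *)
Require Import Defs.
From HB Require Import structures.
From mathcomp Require Import all_boot all_order all_algebra.
From mathcomp Require Import all_classical all_reals all_analysis.
From mathcomp Require Import measurable_realfun.
From mathcomp Require Import ring lra.
Import Order.TTheory GRing.Theory Num.Theory.
Local Open Scope ring_scope.

Section toolkit.
Context d (T : measurableType d) (R : realType) (P : probability T R).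
Local Open Scope ereal_scope.

Lemma E_add (f g : T -> R) : measurable_fun setT f -> measurable_fun setT g ->
  (forall w, 0 <= f w)%R -> (forall w, 0 <= g w)%R ->
  'E_P[fun w => (f w + g w)%R] = 'E_P[f] + 'E_P[g].
Proof.
move=> mf mg f0 g0; rewrite unlock.
rewrite -ge0_integralD//;
  try solve [by move=> w _; rewrite lee_fin | exact/measurable_EFinP].
all: try by apply: eq_integral => w _; rewrite EFinD.
Qed.

Lemma E_sum (I : Type) (s : seq I) (f : I -> T -> R) :
  (forall i, measurable_fun setT (f i)) -> (forall i w, 0 <= f i w)%R ->
  'E_P[fun w => (\sum_(i <- s) f i w)%R] = \sum_(i <- s) 'E_P[f i].
Proof.
move=> mf f0; rewrite unlock.
under eq_integral do rewrite -sumEFin.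
rewrite ge0_integral_sum//;
  try solve [by move=> i w _; rewrite lee_fin | by move=> i; exact/measurable_EFinP].
Qed.

Lemma E_scale (k : R) (f : T -> R) : (0 <= k)%R -> measurable_fun setT f ->
  (forall w, 0 <= f w)%R ->
  'E_P[fun w => (k * f w)%R] = k%:E * 'E_P[f].
Proof.
move=> k0 mf f0; rewrite unlock.
under eq_integral do rewrite EFinM.
rewrite ge0_integralZl_EFin//;
  try solve [by move=> w _; rewrite lee_fin | exact/measurable_EFinP].
Qed.

Lemma E_le (f g : T -> R) : measurable_fun setT f -> measurable_fun setT g ->
  (forall w, 0 <= f w)%R -> (forall w, f w <= g w)%R ->
  'E_P[f] <= 'E_P[g].
Proof.
move=> mf mg f0 fg; rewrite unlock.
apply: ge0_le_integral => //;
  try solve [by move=> w _; rewrite lee_fin | exact/measurable_EFinP].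
Qed.

Lemma E_fin (f : T -> R) : measurable_fun setT f ->
  (forall w, 0 <= f w <= 1)%R ->
  'E_P[f] = (fine 'E_P[f])%:E /\ (0 <= fine 'E_P[f] <= 1)%R.
Proof.
move=> mf f01.
have h0 : 0 <= 'E_P[f] by apply: expectation_ge0 => w; case/andP: (f01 w).
have h1 : 'E_P[f] <= 1.
  rewrite -(expectation_cst P 1); apply: E_le => //.
  - by move=> w; case/andP: (f01 w).
  - by move=> w; case/andP: (f01 w).
have hf : 'E_P[f] \is a fin_num.
  by rewrite ge0_fin_numE// (le_lt_trans h1)// ltey.
split; first by rewrite fineK.
by rewrite -lee_fin -lee_fin fineK// h0 h1.
Qed.

End toolkit.
Arguments E_add {d T R P f g}.
Arguments E_sum {d T R P I} s {f}.
Arguments E_scale {d T R P} k {f}.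
Arguments E_le {d T R P f g}.
Arguments E_fin {d T R P f}.

Lemma cnt (R : realType) (t : R) (m : nat) : 0 <= t ->
  let S := \sum_(j < m) ((j.+1)%:R <= t)%R%:R in
  [/\ S <= t, S <= m%:R, (t - 1 <= m%:R -> t - 1 <= S) &
     (m%:R <= t - 1 -> m%:R <= S)].
Proof.
move=> t0; elim: m => [|m [IH1 IH2 IH3 IH4]] /=.
  by rewrite big_ord0; split => //; lra.
rewrite big_ord_recr /=.
have hm : (m.+1)%:R = m%:R + 1 :> R by rewrite -natr1.
rewrite hm.
set S := \sum_(i < m) _ in IH1 IH2 IH3 IH4 *.
have [h'|h'] := leP (t - 1) m%:R.
  have := IH3 h'.
  have [h|h] := leP (m%:R + 1) t; rewrite ?mulr1n ?mulr0n; split; lra.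
have := IH4 (ltW h').
have [h|h] := leP (m%:R + 1) t; rewrite ?mulr1n ?mulr0n; split; lra.
Qed.

Lemma tele (R : realType) (I : Type) (s : seq I) (a b : I -> R) (e : R) :
  (forall i, 0 <= a i <= 1) -> (forall i, 0 <= b i <= 1) ->
  (forall i, a i - b i <= e) -> 0 <= e ->
  \prod_(i <- s) a i - \prod_(i <- s) b i <= (size s)%:R * e.
Proof.
move=> ha hb hab e0; elim: s => [|x s IH]; first by rewrite !big_nil /= mul0r subrr.
rewrite !big_cons /= -natr1.
have pa : 0 <= \prod_(i <- s) a i <= 1.
  by apply/andP; split; [apply: prodr_ge0 => i _; case/andP: (ha i)|
    apply: prodr_ile1 => i _; exact: ha].
have pb : 0 <= \prod_(i <- s) b i <= 1.
  by apply/andP; split; [apply: prodr_ge0 => i _; case/andP: (hb i)|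
    apply: prodr_ile1 => i _; exact: hb].
move: (ha x) (hb x) (hab x) pa pb IH.
set A := \prod_(i <- s) a i; set B := \prod_(i <- s) b i.
set c := (size s)%:R.
move=> /andP[? ?] /andP[? ?] ? /andP[? ?] /andP[? ?] ?.
have c0 : 0 <= c by rewrite /c.
have h1 : a x * (A - B) <= c * e.
  have [hAB|hAB] := leP 0 (A - B); nra.
have h2 : B * (a x - b x) <= e.
  have [hab'|hab'] := leP 0 (a x - b x); nra.
lra.
Qed.

Lemma lin1 (R : realType) (A B Q C : R) : A - B <= C -> B <= Q -> A <= Q + C.
Proof. lra. Qed.

Lemma arch_fin (R : realType) (A Q c : R) : 0 <= c ->
  (forall k : nat, A <= Q + c * (k.+1)%:R^-1) -> A <= Q.
Proof.
move=> c0 hk.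
rewrite leNgt; apply/negP => h.
set D := A - Q.
have D0 : 0 < D by rewrite /D subr_gt0.
have cD0 : 0 <= c / D by rewrite divr_ge0// ltW.
have hN := archi_boundP cD0.
set N := Num.Def.archi_bound (c / D) in hN.
have := hk N.
set r := (N.+1)%:R^-1.
have hN1 : (N.+1)%:R = N%:R + 1 :> R by rewrite -natr1.
have rp : 0 < r by rewrite /r invr_gt0 ltr0n.
have e1 : (N%:R + 1) * r = 1 by rewrite -hN1 /r mulfV// pnatr_eq0.
set u := c / D in hN.
have e2 : u * D = c by rewrite /u divfK// gt_eqF.
have h3 : 0 < (N%:R + 1 - u) * (D * r) by apply: mulr_gt0; [lra|exact: mulr_gt0].
have e3 : u * D * r = c * r by rewrite e2.
have e4 : (N%:R + 1) * r * D = D by rewrite e1 mul1r.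
move: h3 e3 e4; rewrite /D; clearbody r u N; nra.
Qed.

Lemma lin2 (R : realType) (y q p w : R) : y + q <= 1 -> p <= q -> w <= p -> y <= 1 - w.
Proof. lra. Qed.

Lemma ind_prod d (T : measurableType d) (R : realType) (I : finType)
  (B : I -> set T) (w : T) :
  \prod_i (\1_(B i) w : R) = \1_(\bigcap_(i in [set: I]) B i) w.
Proof.
rewrite [RHS]indicE.
case: (pselect (exists i, ~ B i w)) => [[i hi]|hn].
  rewrite memNset; last by move=> h; apply: hi; exact: h.
  by rewrite (bigD1 i)//= indicE memNset// mul0r.
have hall : forall i, B i w by apply/not_forallP.
rewrite mem_set; last by move=> i _; exact: hall.
by rewrite big1// => i _; rewrite indicE mem_set.
Qed.

Lemma measurable_bigmax d (T : measurableType d) (R : realType) (I : Type)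
  (s : seq I) (F : I -> T -> R) :
  (forall i, measurable_fun setT (F i)) ->
  measurable_fun setT (fun w => \big[Num.max/0]_(i <- s) F i w).
Proof.
move=> mF; elim: s => [|i s IH].
  by under eq_fun do rewrite big_nil; exact: measurable_cst.
under eq_fun do rewrite big_cons.
exact: measurable_maxr.
Qed.

Section forward.
Context d (T : measurableType d) (R : realType) (P : probability T R).
Variables (n : nat) (X : 'I_n -> {RV P >-> R}).
Hypothesis indep : mutually_independent P X.
Local Open Scope classical_set_scope.
Hypothesis X01 : forall i w, 0 <= X i w <= 1.

Let mX i : measurable_fun setT (X i) := measurable_funPT (X i).
Let mY i : measurable_fun setT (fun w => 1 - X i w).
Proof. by apply: measurable_funB => //; exact: measurable_cst. Qed.

Definition ee i := fine (('E_P[X i])%E).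

Lemma eeE i : ('E_P[X i])%E = (ee i)%:E /\ 0 <= ee i <= 1.
Proof. exact: E_fin. Qed.

Lemma EY i : ('E_P[fun w => (1 - X i w)%R])%E = (1 - ee i)%:E.
Proof.
have b1 : forall w, 0 <= 1 - X i w <= 1 by move=> w; have := X01 i w; lra.
have b0 : forall w, 0 <= 1 - X i w by move=> w; have := X01 i w; lra.
have x0 : forall w, 0 <= X i w by move=> w; have := X01 i w; lra.
have [hYf _] := E_fin (P:=P) (mY i) b1.
have := E_add (P:=P) (mY i) (mX i) b0 x0.
rewrite (_ : (fun w => 1 - X i w + X i w) = cst 1); last first.
  by apply/funext => w; rewrite subrK.
rewrite expectation_cst hYf (proj1 (eeE i)) -EFinD => /eqP.
rewrite eqe => /eqP h.
by rewrite hYf; congr (_%:E); lra.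
Qed.

Definition Aset (K : nat) i (j : 'I_K) : set T :=
  X i @^-1` [set r : R | r <= 1 - (j.+1)%:R / K%:R].
Arguments Aset {K}.

Lemma mAset K i (j : 'I_K) : measurable (Aset i j).
Proof.
apply: measurable_funPTI.
by rewrite -set_itvNyc; exact: measurable_itv.
Qed.

Lemma indA (K : nat) i (j : 'I_K) w : (0 < K)%N ->
  \1_(Aset i j) w = ((j.+1)%:R <= K%:R * (1 - X i w))%R%:R :> R.
Proof.
move=> K0; rewrite indicE; congr (_%:R); congr (nat_of_bool _).
have Kp : 0 < K%:R :> R by rewrite ltr0n.
have hK : K%:R * ((j.+1)%:R / K%:R) = (j.+1)%:R :> R.
  by rewrite mulrC divfK// gt_eqF.
move: hK; set u := (j.+1)%:R; set v := u / K%:R => hK.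
apply/Bool.eq_iff_eq_true; split => [/set_mem h|h].
  have h' : X i w <= 1 - v := h; rewrite -hK; nra.
apply/mem_set; suff : X i w <= 1 - v by []; rewrite -hK in h; nra.
Qed.

Definition Lf (K : nat) i w : R := K%:R^-1 * \sum_(j < K) \1_(Aset i j) w.

Lemma mLf K i : measurable_fun setT (Lf K i).
Proof.
apply: measurable_funM; first exact: measurable_cst.
apply: measurable_sum => j; apply: measurable_indic; exact: mAset.
Qed.

Lemma Lf_bounds k i w : let K := k.+1 in
  [/\ 0 <= Lf K i w, Lf K i w <= 1 - X i w & 1 - X i w <= Lf K i w + K%:R^-1].
Proof.
move=> K; rewrite /Lf.
under eq_bigr do rewrite indA//.
have Kp : 0 < K%:R :> R by rewrite ltr0n.
have hKi : K%:R * K%:R^-1 = 1 :> R by rewrite mulfV// gt_eqF.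
have Ki0 : 0 < K%:R^-1 :> R by rewrite invr_gt0.
have t0 : 0 <= K%:R * (1 - X i w) by have := X01 i w; nra.
have tK : K%:R * (1 - X i w) <= K%:R by have := X01 i w; nra.
have [c1 c2 c3 _] := @cnt R _ K t0.
move: c1 c2 c3; set S := \sum_(j < K) _ => c1 c2 c3.
have c3' := c3 ltac:(lra).
have S0 : 0 <= S by apply: sumr_ge0 => j _.
split; nra.
Qed.


Lemma mprodY : measurable_fun setT (fun w => \prod_(i < n) (1 - X i w)).
Proof. by apply: measurable_prod => i _; exact: mY. Qed.

Lemma prodY01 w : 0 <= \prod_(i < n) (1 - X i w) <= 1.
Proof.
apply/andP; split; first by apply: prodr_ge0 => i _; have := X01 i w; lra.
by apply: prodr_ile1 => i _; have := X01 i w; lra.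
Qed.

Definition qY := fine ('E_P[fun w => (\prod_(i < n) (1 - X i w))%R])%E.

Lemma qYE : ('E_P[fun w => (\prod_(i < n) (1 - X i w))%R])%E = qY%:E.
Proof. exact: (E_fin mprodY prodY01).1. Qed.

Lemma mC K (f : {ffun 'I_n -> 'I_K}) :
  measurable (\bigcap_(i in [set: 'I_n]) Aset i (f i)).
Proof.
apply/(measurable_indicP R).
rewrite (_ : \1_ _ = fun w => \prod_i \1_(Aset i (f i)) w); last first.
  by apply/funext => w; rewrite ind_prod.
by apply: measurable_prod => i _; apply: measurable_indic; exact: mAset.
Qed.

Lemma key_k k : \prod_(i < n) (1 - ee i) <=
  qY + (size (index_enum 'I_n))%:R * (k.+1)%:R^-1.
Proof.
set K := k.+1.
have Kp : 0 < K%:R :> R by rewrite ltr0n.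
have Ki0 : 0 <= K%:R^-1 :> R by rewrite invr_ge0 ltW.
pose p i (j : 'I_K) := fine (P (Aset i j)).
have pE i j : P (Aset i j) = (p i j)%:E.
  by rewrite fineK// fin_num_measure//; exact: mAset.
pose l i := K%:R^-1 * \sum_(j < K) p i j.
have Lb := Lf_bounds k.
have EL i : ('E_P[Lf K i])%E = (l i)%:E.
  have -> : ('E_P[Lf K i])%E =
      ((K%:R^-1)%:E * 'E_P[fun w => (\sum_(j < K) \1_(Aset i j) w)%R])%E.
    apply: E_scale => //.
      by apply: measurable_sum => j; apply: measurable_indic; exact: mAset.
    by move=> w; apply: sumr_ge0 => j _.
  rewrite E_sum; last 2 first.
    by move=> j; apply: measurable_indic; exact: mAset.
    by move=> j w.
  rewrite (eq_bigr (fun j => (p i j)%:E)); last first.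
    by move=> j _; rewrite expectation_indic ?pE//; exact: mAset.
  by rewrite sumEFin -EFinM.
have prodLE w : \prod_i Lf K i w = (\prod_(i < n) K%:R^-1) *
    \sum_(f : {ffun 'I_n -> 'I_K}) \1_(\bigcap_(i in [set: 'I_n]) Aset i (f i)) w.
  rewrite /Lf big_split /=; congr (_ * _).
  by rewrite bigA_distr_bigA; apply: eq_bigr => f _; exact: ind_prod.
have EprodL : ('E_P[fun w => (\prod_i Lf K i w)%R])%E = (\prod_i l i)%:E.
  rewrite (_ : (fun w => _) = fun w => (\prod_(i < n) K%:R^-1) *
    \sum_(f : {ffun 'I_n -> 'I_K}) \1_(\bigcap_(i in [set: 'I_n]) Aset i (f i)) w);
    last by apply/funext => w; rewrite prodLE.
  rewrite E_scale; last 3 first.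
  - by apply: prodr_ge0.
  - by apply: measurable_sum => f; apply: measurable_indic; exact: mC.
  - by move=> w; apply: sumr_ge0.
  rewrite E_sum; last 2 first.
    by move=> f; apply: measurable_indic; exact: mC.
    by move=> f w.
  rewrite (eq_bigr (fun f : {ffun 'I_n -> 'I_K} => (\prod_i p i (f i))%:E)); last first.
    move=> f _; rewrite expectation_indic; last exact: mC.
    have -> : P (\bigcap_(i in [set: 'I_n]) Aset i (f i)) =
        (\prod_i P (Aset i (f i)))%E.
      apply: (indep (fun i => [set r : R | r <= 1 - ((f i).+1)%:R / K%:R])).
      by move=> i; rewrite -set_itvNyc; exact: measurable_itv.
    by rewrite (eq_bigr (fun i => (p i (f i))%:E)) ?prodEFin// => i _; rewrite pE.
  rewrite sumEFin -EFinM; congr (_%:E).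
  by rewrite /l big_split /= bigA_distr_bigA.
have hl i : [/\ 0 <= l i, l i <= 1 - ee i & 1 - ee i <= l i + K%:R^-1].
  split.
  - rewrite -lee_fin -EL; apply: expectation_ge0 => w.
    by have [] := Lb i w.
  - rewrite -lee_fin -EL -EY; apply: E_le.
    + exact: mLf.
    + exact: mY.
    + by move=> w; have [] := Lb i w.
    + by move=> w; have [] := Lb i w.
  - have := E_le (P:=P) (f := fun w => 1 - X i w)
      (g := fun w => Lf K i w + K%:R^-1) (mY i).
    rewrite E_add; last 4 first.
    + exact: mLf.
    + exact: measurable_cst.
    + by move=> w; have [] := Lb i w.
    + by move=> w.
    rewrite EL expectation_cst EY -EFinD lee_fin; apply.
    + by apply: measurable_funD; [exact: mLf|exact: measurable_cst].
    + by move=> w; have := X01 i w; lra.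
    + by move=> w; have [] := Lb i w.
have prodl : \prod_i l i <= qY.
  rewrite -lee_fin -EprodL -qYE; apply: E_le.
  - by apply: measurable_prod => i _; exact: mLf.
  - exact: mprodY.
  - by move=> w; apply: prodr_ge0 => i _; have [] := Lb i w.
  - move=> w; apply: ler_prod => i _; have [? ? _] := Lb i w; lra.
have := @tele R _ (index_enum 'I_n) (fun i => 1 - ee i) l (K%:R^-1).
move=> /(_ _ _ _ Ki0) H.
have H2 : \prod_(i < n) (1 - ee i) - \prod_i l i <=
   (size (index_enum 'I_n))%:R * K%:R^-1.
  apply: H.
  - by move=> i; have := (eeE i).2; lra.
  - by move=> i; have [? ? ?] := hl i; have := (eeE i).2; lra.
  - by move=> i; have [? ? ?] := hl i; lra.
exact: lin1 H2 prodl.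
Qed.

Lemma key : \prod_(i < n) (1 - ee i) <= qY.
Proof. by apply: (@arch_fin R _ _ _ _ key_k); rewrite ler0n. Qed.


Lemma fwd_result (n0 : (0 < n)%N) (x y : R) :
  x%:E = U_val P X -> y%:E = M_val P X ->
  (0 <= x <= 1) /\ (x <= y <= 1 - (1 - x) ^+ n).
Proof.
move=> hx hy.
pose i0 : 'I_n := Ordinal n0.
have [j _ hj] := @eq_bigmax _ _ 'I_n (-oo)%E i0 xpredT (fun i => 'E_P[X i])%E isT
  (fun i _ => leNye _).
rewrite /U_val hj (proj1 (eeE j)) in hx.
case: hx => hx.
have hle i : ee i <= x.
  rewrite -lee_fin hx -(proj1 (eeE i)) -(proj1 (eeE j)) -hj.
  exact: (@le_bigmax _ _ 'I_n (-oo)%E (fun i => 'E_P[X i])%E i).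
have hx01 := (eeE j).2; rewrite -hx in hx01.
split => //.
set M := fun w => \big[Num.max/0]_(i < n) X i w.
have mM : measurable_fun setT M by apply: measurable_bigmax.
have XM i w : X i w <= M w by exact: (@le_bigmax _ _ 'I_n 0 (fun i => X i w) i).
have M0 w : 0 <= M w by apply: le_trans (XM j w); have := X01 j w; lra.
have x0 i w : 0 <= X i w by have := X01 i w; lra.
have hxy : x <= y.
  rewrite -lee_fin hy /M_val hx -(proj1 (eeE j)).
  by apply: E_le => //.
have MY w : M w + \prod_(i < n) (1 - X i w) <= 1.
  suff : M w <= 1 - \prod_(i < n) (1 - X i w) by lra.
  apply: bigmax_le; first by have := prodY01 w; lra.
  move=> i _.
  rewrite (bigD1 i)//=.
  have h1 : \prod_(k < n | k != i) (1 - X k w) <= 1.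
    by apply: prodr_ile1 => k _; have := X01 k w; lra.
  have h2 : 0 <= \prod_(k < n | k != i) (1 - X k w).
    by apply: prodr_ge0 => k _; have := X01 k w; lra.
  have := X01 i w; clear -h1 h2; move: (\prod_(k < n | k != i) (1 - X k w)) h1 h2 => p h1 h2 h3.
  nra.
have hyq : y + qY <= 1.
  rewrite -lee_fin EFinD hy -qYE /M_val -(expectation_cst P 1).
  rewrite -E_add//; try exact: mprodY; try (by move=> w; have := prodY01 w; lra).
  apply: E_le.
  - apply: measurable_funD => //; exact: mprodY.
  - exact: measurable_cst.
  - by move=> w; apply: addr_ge0; [exact: M0|have := prodY01 w; lra].
  - by move=> w; exact: MY.
have hk := key.
have hpow : (1 - x) ^+ n <= \prod_(i < n) (1 - ee i).
  rewrite -[n in _ ^+ n]card_ord -prodr_const.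
  by apply: ler_prod => i _; have := hle i; have := (eeE i).2; lra.
by rewrite hxy /= (@lin2 R _ _ _ _ hyq hk hpow).
Qed.

End forward.

Definition Tn (n : nat) := {ffun 'I_n -> bool}.
HB.instance Definition _ n := Finite.on (Tn n).
HB.instance Definition _ n := isPointed.Build (Tn n) [ffun=> false].
HB.instance Definition _ n := @isMeasurable.Build default_measure_display (Tn n)
  discrete_measurable discrete_measurable0 discrete_measurableC
  discrete_measurableU.

Section backward.
Context (R : realType) (n : nat) (p : 'I_n -> R).
Hypothesis p01 : forall i, 0 <= p i <= 1.

Definition qb i (b : bool) : R := if b then p i else 1 - p i.
Definition wt (t : Tn n) : R := \prod_i qb i (t i).

Lemma qb_ge0 i b : 0 <= qb i b.
Proof. by rewrite /qb; case: b; have := p01 i; lra. Qed.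

Lemma wt_ge0 t : 0 <= wt t.
Proof. by apply: prodr_ge0 => i _; exact: qb_ge0. Qed.

Definition wmu (A : set (Tn n)) : \bar R := let _ := p01 in (\sum_(t \in A) (wt t)%:E)%E.

Let wmu0 : wmu set0 = 0%E.
Proof. by rewrite /wmu /= fsbig_set0. Qed.

Let wmu_ge0 A : (0 <= wmu A)%E.
Proof.
rewrite /wmu /= fsbig_finite//= sumEFin lee_fin.
by apply: sumr_ge0 => /= t _; exact: wt_ge0.
Qed.

Let wmu_sigma_additive : semi_sigma_additive wmu.
Proof.
move=> F mF tF mUF; rewrite /wmu /=.
apply: cvg_toP.
  apply: ereal_nondecreasing_is_cvgn => m k mk.
  apply: lee_sum_nneg_natr => // j _ _.
  rewrite fsbig_finite//= sumEFin lee_fin.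
  by apply: sumr_ge0 => /= b _; exact: wt_ge0.
transitivity (\sum_(0 <= i <oo) (\esum_(j in F i) (wt j)%:E))%E.
apply: eq_eseriesr => k _; rewrite esum_fset//= => b _.
  by rewrite lee_fin wt_ge0.
rewrite -nneseries_sum_bigcup//=; last first.
  by move=> b; rewrite lee_fin wt_ge0.
by rewrite esum_fset//= => b _; rewrite lee_fin wt_ge0.
Qed.

HB.instance Definition _ := isMeasure.Build _ _ _ wmu
  wmu0 wmu_ge0 wmu_sigma_additive.

Lemma sum_prod (h : 'I_n -> bool -> R) :
  \sum_(t : Tn n) wt t * \prod_k h k (t k) =
  \prod_k (qb k true * h k true + qb k false * h k false).
Proof.
rewrite (eq_bigr (fun t : Tn n => \prod_k (qb k (t k) * h k (t k)))); last first.
  by move=> t _; rewrite /wt big_split.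
rewrite -(bigA_distr_bigA (fun k b => qb k b * h k b)).
by apply: eq_bigr => k _; rewrite big_bool.
Qed.

Lemma sum_wt : \sum_(t : Tn n) wt t = 1.
Proof.
have := sum_prod (fun _ _ => 1).
rewrite (eq_bigr (fun t : Tn n => wt t)); last by move=> t _; rewrite big1_eq mulr1.
move=> ->; rewrite big1// => k _; rewrite /qb !mulr1; ring.
Qed.

Let wmu_setT : wmu [set: Tn n] = 1%E.
Proof.
rewrite /wmu /= (fsbigE (index_enum (Tn n)))//=; last 2 first.
- exact (index_enum_uniq (Tn n)).
- by move=> t _; rewrite mem_index_enum.
under eq_bigl => t do rewrite in_setT.
by rewrite sumEFin sum_wt.
Qed.

HB.instance Definition _ :=
  @Measure_isProbability.Build _ _ R wmu wmu_setT.


Lemma mall (f : Tn n -> R) : measurable_fun setT f.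
Proof. by move=> _ Y _. Qed.

Lemma wmu1 t : wmu [set t] = (wt t)%:E.
Proof. by rewrite /wmu /= fsbig_set1. Qed.

Lemma E_disc (f : Tn n -> R) : (forall t, 0 <= f t) ->
  ('E_wmu[f])%E = (\sum_(t : Tn n) wt t * f t)%:E.
Proof.
move=> f0.
rewrite [in LHS](_ : f = fun w => \sum_(t : Tn n) f t * \1_[set t] w); last first.
  apply/funext => w; rewrite (bigD1 w)//= indicE mem_set// mulr1 big1 ?addr0//.
  move=> t /negbTE tw; rewrite indicE memNset ?mulr0//= => h.
  by rewrite h eqxx in tw.
rewrite E_sum; last 2 first.
  by move=> t; exact: mall.
  by move=> t w; rewrite mulr_ge0// indicE ler0n.
rewrite (eq_bigr (fun t => (wt t * f t)%:E)) ?sumEFin//.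
move=> t _; rewrite E_scale//; try exact: mall;
  try (by move=> w; rewrite indicE ler0n).
rewrite expectation_indic//.
transitivity ((f t)%:E * (wt t)%:E)%E; last by rewrite -EFinM mulrC.
by congr (_ * _)%E; exact: wmu1.
Qed.

Lemma prod_single i (g : bool -> R) :
  \prod_k (qb k true * (if k == i then g true else 1) +
           qb k false * (if k == i then g false else 1)) =
  qb i true * g true + qb i false * g false.
Proof.
rewrite (bigD1 i)//= eqxx big1 ?mulr1// => k /negbTE ->.
by rewrite /qb !mulr1; ring.
Qed.

Lemma sum_single i (g : bool -> R) :
  \sum_(t : Tn n) wt t * g (t i) = qb i true * g true + qb i false * g false.
Proof.
rewrite -prod_single -(sum_prod (fun k b => if k == i then g b else 1)).
apply: eq_bigr => t _; congr (_ * _).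
by rewrite (bigD1 i)//= eqxx big1 ?mulr1// => k /negbTE ->.
Qed.

Definition Xf i (t : Tn n) : R := (t i)%:R.

Lemma Xf_in i : Xf i \in mfun.
Proof. by apply/mem_set; exact: mall. Qed.

Definition XR i : {mfun Tn n >-> R} := mfun_Sub (Xf_in i).

Lemma XRE i t : XR i t = (t i)%:R.
Proof. by []. Qed.

Lemma EX i : ('E_wmu[XR i])%E = (p i)%:E.
Proof.
rewrite E_disc; last by move=> t; rewrite XRE ler0n.
by rewrite (sum_single i (fun b => b%:R)) /qb /= mulr1 mulr0 addr0.
Qed.

Lemma indep_w : mutually_independent wmu XR.
Proof.
move=> B mB.
rewrite -expectation_indic//.
rewrite E_disc; last by move=> t; rewrite indicE ler0n.
rewrite (eq_bigr (fun i => (qb i true * \1_(B i) (1%:R) +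
                            qb i false * \1_(B i) (0%:R))%:E)); last first.
  move=> i _; rewrite -expectation_indic//.
  rewrite E_disc; last by move=> t; rewrite indicE ler0n.
  by rewrite -(sum_single i (fun b => \1_(B i) (b%:R))).
rewrite prodEFin -(sum_prod (fun k b => \1_(B k) (b%:R))).
congr (_%:E); apply: eq_bigr => t _; congr (_ * _).
by rewrite -ind_prod.
Qed.

Lemma UX : U_val wmu XR = (\big[maxe/-oo]_(i < n) (p i)%:E)%E.
Proof. by apply: eq_bigr => i _; rewrite EX. Qed.

Lemma MX : M_val wmu XR = (1 - \prod_(i < n) (1 - p i))%:E.
Proof.
rewrite /M_val E_disc; last first.
  move=> t; apply: (big_ind (fun x : R => 0 <= x)) => //;
  try (by move=> a b ha hb; rewrite le_max ha);
  try (by move=> i _; rewrite XRE ler0n).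
rewrite (eq_bigr (fun t : Tn n => wt t - wt t * \prod_(k < n) (1 - (t k)%:R))); last first.
  move=> t _; rewrite -[X in X - _]mulr1 -mulrBr; congr (_ * _).
  case: (pselect (exists i, t i)) => [[i hi]|hn].
    have -> : \prod_(k < n) (1 - (t k)%:R) = 0 :> R.
      by rewrite (bigD1 i)//= hi subrr mul0r.
    rewrite subr0; apply/eqP; rewrite eq_le; apply/andP; split.
      apply: bigmax_le => //= k _; rewrite /Xf; by case: (t k).
    by have := @le_bigmax _ _ 'I_n 0 (fun k => XR k t) i; rewrite /= /Xf hi.
  have hf k : t k = false by apply/negP => h; apply: hn; exists k.
  have -> : \prod_(k < n) (1 - (t k)%:R) = 1 :> R.
    by rewrite big1// => k _; rewrite hf subr0.
  rewrite subrr bigmax_eq_id// => k _.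
  by rewrite le_eqVlt; apply/orP; left; apply/eqP; apply: (etrans (XRE k t)); rewrite hf.
rewrite sumrB sum_wt.
have := sum_prod (fun _ b => 1 - b%:R) => /= ->.
congr (_%:E); congr (_ - _); apply: eq_bigr => k _.
by rewrite /qb; ring.
Qed.

End backward.

Lemma choose_s (R : realType) (m : nat) (x y : R) : (0 < m)%N ->
  0 <= x <= 1 -> x <= y -> y <= 1 - (1 - x) ^+ m.+1 ->
  exists s, 0 <= s <= x /\ (1 - x) * (1 - s) ^+ m = 1 - y.
Proof.
move=> m0 /andP[x0 x1] xy yb.
have [x1e|x1n] := eqVneq x 1.
  subst x; exists 0; split; first by rewrite lexx ler01.
  rewrite subrr expr0n /= in yb.
  by rewrite subrr mul0r; lra.
have x1' : x < 1 by rewrite lt_neqAle x1n x1.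
have d0 : 0 < 1 - x by lra.
set r := (1 - y) / (1 - x).
have hr : r * (1 - x) = 1 - y by rewrite /r divfK// gt_eqF.
have pm0 : 0 <= (1 - x) ^+ m by rewrite exprn_ge0// ltW.
have hr1 : r <= 1.
  rewrite leNgt; apply/negP => h.
  have : 1 * (1 - x) < r * (1 - x) by rewrite ltr_pM2r.
  lra.
have hr2 : (1 - x) ^+ m <= r.
  rewrite leNgt; apply/negP => h.
  have : r * (1 - x) < (1 - x) ^+ m * (1 - x) by rewrite ltr_pM2r.
  by rewrite -exprSr hr; lra.
have r0 : 0 <= r by apply: le_trans hr2.
set a := r `^ (m%:R^-1).
have a0 : 0 <= a by exact: powR_ge0.
have am : a ^+ m = r.
  rewrite -powR_mulrn// /a -powRrM mulVf ?powRr1// pnatr_eq0 -lt0n.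
  exact: m0.
exists (1 - a); split.
  apply/andP; split.
    rewrite subr_ge0 -(ler_pXn2r m0) ?nnegrE// expr1n am//.
  rewrite lerBlDr addrC -lerBlDr -(ler_pXn2r m0) ?nnegrE// ?am//.
  lra.
have -> : 1 - (1 - a) = a by ring.
by rewrite am mulrC.
Qed.

Theorem theorem1 (R : realType) (n : nat) (hn : (2 <= n)%N) (x y : R) :
  (exists (d : measure_display) (T : measurableType d) (P : probability T R)
          (X : 'I_n -> {RV P >-> R}),
      mutually_independent P X /\
      (forall i w, 0 <= X i w <= 1) /\
      x%:E = U_val P X /\ y%:E = M_val P X)
  <->
  (0 <= x <= 1 /\ x <= y <= 1 - (1 - x) ^+ n).
Proof.
split.
  move=> [d [T [P [X [hi [hb [hx hy]]]]]]].
  have n0 : (0 < n)%N by apply: leq_trans hn.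
  exact: (@fwd_result d T R P n X hi hb n0 x y hx hy).
case: n hn => [//|m] hn.
move=> [hx01 /andP[xy yb]].
have m0 : (0 < m)%N by [].
have [s [/andP[s0 sx] hs]] := @choose_s R m x y m0 hx01 xy yb.
pose p (i : 'I_m.+1) : R := if i == ord0 then x else s.
have p01 i : 0 <= p i <= 1.
  by rewrite /p; case: ifP => _; move: hx01 => /andP[? ?]; apply/andP; split; lra.
exists default_measure_display, (Tn m.+1), (@wmu R m.+1 p p01), (@XR R m.+1).
split; first exact: indep_w.
split.
  by move=> i w; rewrite XRE ler0n /=; case: (w i).
split.
  rewrite UX; apply/eqP; rewrite eq_le; apply/andP; split.
    by have := @le_bigmax _ _ 'I_m.+1 (-oo)%E (fun i => (p i)%:E) ord0; rewrite /p eqxx.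
  apply: bigmax_le; first exact: leNye.
  by move=> i _; rewrite lee_fin /p; case: ifP => _ //.
rewrite MX; congr (_%:E).
rewrite big_ord_recl /p eqxx.
rewrite (eq_bigr (fun _ => 1 - s)); last by move=> i _; rewrite eq_sym (negbTE (neq_lift _ _)).
by rewrite prodr_const card_ord hs; ring.
Qed.
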